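(* Let $T>0$, $0<\eta<T$, $0<\alpha<\frac{1}{\eta}$, let $f\in C([0,\infty),[0,\infty))$, and let $a\in C([0,T],[0,\infty))$ with $a(t_0)>0$ for some $t_0\in[0,T]$. Consider the boundary value problem \[ u''(t)+a(t)f(u(t))=0,\quad 0<t<T,\qquad u'(0)=0,\quad u(T)=\alpha\int_0^{\eta}u(s)\,ds. \tag{P} \] Assume that $f_0=\alpha_1\in[0,\theta_1\Lambda_1)$ for some $\theta_1\in(0,1]$, and $f_\infty=\beta_1\in\left(\frac{\theta_2}{\gamma}\Lambda_2,\infty\right)$ for some $\theta_2\ge1$. Then (P) has at least one positive solution.
   Context: $f_0=\lim_{u\to0^+}\frac{f(u)}{u}$, $f_\infty=\lim_{u\to\infty}\frac{f(u)}{u}$ (assumed to exist with the stated values; $\alpha_1,\beta_1$ are just names for these limits). $\gamma=\dfrac{\alpha\eta(T-\eta)}{T-\alpha\eta^2}$, $\Lambda_1=\dfrac{1-\alpha\eta}{\int_0^T (T-s)a(s)\,ds}$, and $\Lambda_2=\dfrac{1-\alpha\eta}{\gamma\left(\int_\eta^T (T-s)a(s)\,ds+\frac12\int_0^\eta\left[2(T-\eta)+\alpha(\eta^2-s^2)\right]a(s)\,ds\right)}$. A positive solution of (P) is a function $u\in C^2([0,T])$ satisfying (P) with $u(t)\ge0$ on $[0,T]$ and $u$ not identically zero. *)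

(* Defs.v *)
From Stdlib Require Import Reals.
From Coquelicot Require Import Coquelicot.
Open Scope R_scope.

Definition cont_on (D : R -> Prop) (g : R -> R) : Prop :=
  forall x, D x -> filterlim g (within D (locally x)) (locally (g x)).

Definition Icc (a b : R) : R -> Prop := fun t => a <= t <= b.

(* u is C^2 on [0,T]: (a representative on R) twice differentiable at every
   point of [0,T], with second derivative continuous on [0,T]. *)
Definition C2_on (a b : R) (u : R -> R) : Prop :=
  (forall t, Icc a b t -> ex_derive u t /\ ex_derive (Derive u) t) /\
  cont_on (Icc a b) (Derive_n u 2).

Definition gammaP (T eta alpha : R) : R :=
  alpha * eta * (T - eta) / (T - alpha * eta ^ 2).

Definition Lambda1 (T eta alpha : R) (a : R -> R) : R :=
  (1 - alpha * eta) / RInt (fun s => (T - s) * a s) 0 T.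

Definition Lambda2 (T eta alpha : R) (a : R -> R) : R :=
  (1 - alpha * eta) /
  (gammaP T eta alpha *
    (RInt (fun s => (T - s) * a s) eta T
     + / 2 * RInt (fun s => (2 * (T - eta) + alpha * (eta ^ 2 - s ^ 2)) * a s) 0 eta)).

Definition positive_solution (T eta alpha : R) (a f : R -> R) (u : R -> R) : Prop :=
  C2_on 0 T u /\
  (forall t, 0 < t < T -> Derive_n u 2 t + a t * f (u t) = 0) /\
  Derive u 0 = 0 /\
  u T = alpha * RInt u 0 eta /\
  (forall t, 0 <= t <= T -> 0 <= u t) /\
  (exists t, 0 <= t <= T /\ u t <> 0).

(* Main.v *)
Require Import Defs.
From Stdlib Require Import Reals Lra Lia Psatz Classical IndefiniteDescription.
From Coquelicot Require Import Coquelicot.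
From mathcomp Require classical.boolp classical.classical_sets classical.filter.
Open Scope R_scope.

Lemma ultra_nat : exists U : (nat -> Prop) -> Prop,
  (forall P Q, U P -> U Q -> U (fun n => P n /\ Q n)) /\
  (forall P Q : nat -> Prop, (forall n, P n -> Q n) -> U P -> U Q) /\
  ~ U (fun _ => False) /\
  (forall P, U P \/ U (fun n => ~ P n)) /\
  (forall N, U (fun n => (N <= n)%nat)).
Proof.
destruct (@filter.ultraFilterLemma nat filter.eventually filter.eventually_filter) as [G [GU sFG]].
pose proof (@filter.ultra_proper _ G GU) as PG.
assert (FG : filter.Filter G) by exact (@filter.filter_filter _ G PG).
exists G; split; [|split; [|split; [|split]]].
- intros P Q HP HQ. exact (@filter.filterI _ G FG P Q HP HQ).
- intros P Q PQ HP. exact (@filter.filterS _ G FG P Q PQ HP).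
- intros H. destruct (@filter.filter_ex _ G PG (fun _ => False) H). easy.
- intros P. exact (@filter.in_ultra_setVsetC _ G P GU).
- intros N. apply sFG. exists N. easy. intros n Hn. simpl in Hn. destruct (@ssrnat.leP N n) as [h|h]; [exact h| discriminate Hn].
Qed.

Record ultra (U : (nat -> Prop) -> Prop) : Prop := {
 uI : forall P Q, U P -> U Q -> U (fun n => P n /\ Q n);
 uS : forall P Q : nat -> Prop, (forall n, P n -> Q n) -> U P -> U Q;
 u0 : ~ U (fun _ => False);
 uC : forall P, U P \/ U (fun n => ~ P n);
 uN : forall N, U (fun n => (N <= n)%nat) }.

Lemma ultra_exists : exists U, ultra U.
Proof.
destruct ultra_nat as [U [H1 [H2 [H3 [H4 H5]]]]]. exists U. split; auto.
Qed.

Lemma U_ex U (HU : ultra U) P : U P -> exists n, P n.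
Proof. intros H. apply NNPP. intro C. apply (u0 _ HU). apply (uS _ HU P); [|exact H].
intros n Pn. apply C. exists n. exact Pn. Qed.

Lemma U_T U (HU: ultra U) (P : nat -> Prop) : (forall n, P n) -> U P.
Proof. intros H. apply (uS _ HU (fun n => (0 <= n)%nat)). intros; apply H. apply (uN _ HU). Qed.

Lemma U_fin U (HU : ultra U) (P : nat -> nat -> Prop) m :
  (forall i, (i <= m)%nat -> U (P i)) -> U (fun n => forall i, (i <= m)%nat -> P i n).
Proof.
induction m; intros H.
- apply (uS _ HU (P 0%nat)). intros n Hn i Hi. assert (i = 0%nat) by lia. subst; auto. apply H; lia.
- apply (uS _ HU (fun n => (forall i, (i <= m)%nat -> P i n) /\ P (S m) n)).
  + intros n [H1 H2] i Hi. destruct (Nat.eq_dec i (S m)). subst; auto. apply H1; lia.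
  + apply (uI _ HU). apply IHm. intros; apply H; lia. apply H; lia.
Qed.

Lemma ulim_ex U (HU : ultra U) (x : nat -> R) lo hi :
  (forall n, lo <= x n <= hi) ->
  exists l, lo <= l <= hi /\ forall eps, 0 < eps -> U (fun n => Rabs (x n - l) < eps).
Proof.
intros Hb.
set (E := fun y => lo <= y /\ U (fun n => y <= x n)).
assert (Eb : forall y, E y -> y <= hi).
{ intros y [_ Hy]. destruct (Rle_or_lt y hi) as [h|h]; auto. exfalso. apply (u0 _ HU).
  apply (uS _ HU (fun n => y <= x n)); auto. intros n Hn; specialize (Hb n); lra. }
assert (Elo : E lo). { split. lra. apply U_T; auto. intros n; apply Hb. }
destruct (completeness E) as [l [Hl1 Hl2]].
{ exists hi. intros y Hy. auto. }
{ exists lo. auto. }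
assert (lol : lo <= l) by (apply Hl1; auto).
assert (lhi : l <= hi) by (apply Hl2; intros y Hy; auto).
exists l. split. lra. intros eps Heps.
assert (A1 : U (fun n => x n < l + eps)).
{ destruct (uC _ HU (fun n => x n < l + eps)) as [h|h]; auto.
  assert (E (l + eps)). { split. lra. apply (uS _ HU (fun n => ~ x n < l + eps)); [|exact h]. intros n Hn; lra. }
  assert (l + eps <= l) by (apply Hl1; auto). lra. }
assert (A2 : exists y, E y /\ l - eps < y).
{ apply NNPP. intros C. assert (l <= l - eps). apply Hl2. intros y Hy.
  destruct (Rle_or_lt y (l - eps)); auto. exfalso; apply C; exists y; auto. lra. }
destruct A2 as [y [[_ Ey] Hy]].
apply (uS _ HU (fun n => x n < l + eps /\ y <= x n)).
intros n [h1 h2]. apply Rabs_def1; lra.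
apply (uI _ HU); auto.
Qed.

Lemma ulim_uniq U (HU : ultra U) (x : nat -> R) l1 l2 :
  (forall eps, 0 < eps -> U (fun n => Rabs (x n - l1) < eps)) ->
  (forall eps, 0 < eps -> U (fun n => Rabs (x n - l2) < eps)) -> l1 = l2.
Proof.
intros H1 H2. apply NNPP. intros C.
assert (Hd : 0 < Rabs (l1 - l2) / 2). { assert (0 < Rabs (l1 - l2)). apply Rabs_pos_lt. lra. lra. }
destruct (U_ex U HU _ (uI _ HU _ _ (H1 _ Hd) (H2 _ Hd))) as [n [h1 h2]].
apply Rabs_def2 in h1. apply Rabs_def2 in h2.
destruct (Rcase_abs (l1 - l2)) as [h|h]; [rewrite Rabs_left in *|rewrite Rabs_right in *]; lra.
Qed.

Definition Cg (g : R -> R) := forall x, continuous g x.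

Lemma Cg_const c : Cg (fun _ => c).
Proof. intros x. apply continuous_const. Qed.
Lemma Cg_id : Cg (fun x => x).
Proof. intros x. apply continuous_id. Qed.
Lemma Cg_plus g h : Cg g -> Cg h -> Cg (fun x => g x + h x).
Proof. intros Hg Hh x. exact (continuous_plus g h x (Hg x) (Hh x)). Qed.
Lemma Cg_mult g h : Cg g -> Cg h -> Cg (fun x => g x * h x).
Proof. intros Hg Hh x. exact (continuous_mult g h x (Hg x) (Hh x)). Qed.
Lemma Cg_opp g : Cg g -> Cg (fun x => - g x).
Proof. intros Hg x. exact (continuous_opp g x (Hg x)). Qed.
Lemma Cg_minus g h : Cg g -> Cg h -> Cg (fun x => g x - h x).
Proof. intros Hg Hh. apply Cg_plus; auto. apply Cg_opp; auto. Qed.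
Lemma Cg_comp g h : Cg g -> Cg h -> Cg (fun x => h (g x)).
Proof. intros Hg Hh x. exact (continuous_comp g h x (Hg x) (Hh (g x))). Qed.
Lemma Cg_abs : Cg Rabs.
Proof. intros x. apply continuous_Rabs. Qed.
Lemma Cg_ext g h : (forall x, g x = h x) -> Cg g -> Cg h.
Proof. intros E Hg x. exact (continuous_ext g h x E (Hg x)). Qed.

Lemma Cg_max0 : Cg (fun x => Rmax x 0).
Proof.
apply Cg_ext with (fun x => (x + Rabs x) * / 2).
- intros x. unfold Rmax. destruct (Rle_dec x 0).
  rewrite Rabs_left1; lra. rewrite Rabs_right; lra.
- apply Cg_mult. apply Cg_plus. apply Cg_id. apply Cg_abs. apply Cg_const.
Qed.

Definition clamp (T x : R) := Rmax 0 (Rmin x T).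

Lemma Cg_clamp T : 0 <= T -> Cg (clamp T).
Proof.
intros HT.
apply Cg_ext with (fun x => Rmax ((x + T - Rabs (x - T)) * /2) 0).
- intros x. unfold clamp. rewrite Rmax_comm. f_equal. unfold Rmin. destruct (Rle_dec x T).
  rewrite Rabs_left1; lra. rewrite Rabs_right; lra.
- apply (Cg_comp (fun x => (x + T - Rabs (x - T)) * / 2) (fun y => Rmax y 0)).
  apply Cg_mult. apply Cg_minus. apply Cg_plus. apply Cg_id. apply Cg_const.
  apply (Cg_comp (fun x => x - T) Rabs). apply Cg_minus. apply Cg_id. apply Cg_const. apply Cg_abs.
  apply Cg_const. apply Cg_max0.
Qed.

Lemma clamp_in T x : 0 <= T -> 0 <= clamp T x <= T.
Proof. intros. unfold clamp, Rmax, Rmin. repeat destruct Rle_dec; lra. Qed.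
Lemma clamp_id T x : 0 <= x <= T -> clamp T x = x.
Proof. intros. unfold clamp, Rmax, Rmin. repeat destruct Rle_dec; lra. Qed.

Lemma cont_on_comp (D : R -> Prop) g h : cont_on D g -> Cg h -> (forall x, D (h x)) -> Cg (fun x => g (h x)).
Proof.
intros Hg Hh HD x.
unfold continuous.
apply filterlim_comp with (G := within D (locally (h x))).
- intros P HP. unfold within in HP. pose proof (Hh x _ HP) as Hh2. unfold filtermap in *.
  apply filter_imp with (2 := Hh2). intros y Hy. apply Hy. apply HD.
- apply Hg. apply HD.
Qed.

Lemma loc_R x (P : R -> Prop) : locally x P -> exists d, 0 < d /\ forall y, Rabs (y - x) < d -> P y.
Proof.
intros [e He]. exists e. split. apply cond_pos. intros y Hy. apply He.
unfold ball; simpl; unfold AbsRing_ball; unfold abs, minus, plus, opp; simpl. exact Hy.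
Qed.

Lemma Cg_pt g x : Cg g -> continuity_pt g x.
Proof. intros H. apply continuity_pt_filterlim. apply H. Qed.

Lemma unif_cont g lo hi : Cg g -> forall e, 0 < e -> exists d, 0 < d /\
  forall x y, lo <= x <= hi -> lo <= y <= hi -> Rabs (x - y) < d -> Rabs (g x - g y) < e.
Proof.
intros Hg e He.
destruct (Heine g (fun c => lo <= c <= hi) (compact_P3 lo hi)) with (eps := mkposreal e He) as [d Hd].
{ intros; apply Cg_pt; auto. }
exists d. split. apply cond_pos. intros. apply Hd; auto.
Qed.

Lemma max_bound g lo hi : Cg g -> lo <= hi -> exists M, forall x, lo <= x <= hi -> g x <= M.
Proof.
intros Hg H. destruct (continuity_ab_maj g lo hi H) as [m [Hm _]].
intros; apply Cg_pt; auto. exists (g m). auto.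
Qed.

Ltac rring := match goal with |- ?a = ?b => change (@eq R a b) end; cbv beta; ring.
Ltac rfield := match goal with |- ?a = ?b => change (@eq R a b) end; cbv beta; field.

Lemma RInt_extR (f g : R -> R) a b : (forall x, f x = g x) -> RInt f a b = RInt g a b.
Proof. intros H. apply RInt_ext. intros; apply H. Qed.

Lemma abs_le_e x e : Rabs x <= e -> -e <= x <= e.
Proof. intros. destruct (Rcase_abs x); [rewrite Rabs_left in H|rewrite Rabs_right in H]; lra. Qed.
Lemma abs_lt_e x e : Rabs x < e -> -e < x < e.
Proof. intros. destruct (Rcase_abs x); [rewrite Rabs_left in H|rewrite Rabs_right in H]; lra. Qed.

Lemma exR g a b : Cg g -> ex_RInt g a b.
Proof. intros H. apply (@ex_RInt_continuous R_CompleteNormedModule). intros; apply H. Qed.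

Lemma prim_der g x : Cg g -> is_derive (fun y => RInt g 0 y) x (g x).
Proof.
intros H. apply (is_derive_RInt g (fun y => RInt g 0 y) 0 x).
apply filter_forall. intros y. apply (@RInt_correct R_CompleteNormedModule). apply exR; auto.
apply H.
Qed.

Lemma prim_C g : Cg g -> Cg (fun y => RInt g 0 y).
Proof. intros H x. apply (@ex_derive_continuous R_AbsRing R_NormedModule). eexists. apply prim_der; auto. Qed.

Definition DI (g : R -> R) (t : R) : R := RInt (fun u => RInt g 0 u) 0 t.

Lemma DI_C g : Cg g -> Cg (DI g).
Proof. intros H. unfold DI. apply prim_C. apply prim_C. auto. Qed.

Lemma RInt_minusC g h a b : Cg g -> Cg h -> RInt (fun x => g x - h x) a b = RInt g a b - RInt h a b.
Proof. intros. exact (RInt_minus _ _ a b (exR g a b H) (exR h a b H0)). Qed.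
Lemma RInt_plusC g h a b : Cg g -> Cg h -> RInt (fun x => g x + h x) a b = RInt g a b + RInt h a b.
Proof. intros. exact (RInt_plus _ _ a b (exR g a b H) (exR h a b H0)). Qed.
Lemma RInt_scalC g k a b : Cg g -> RInt (fun x => k * g x) a b = k * RInt g a b.
Proof. intros. exact (RInt_scal _ a b k (exR g a b H)). Qed.
Lemma RInt_constR a b (c : R) : RInt (fun _ => c) a b = (b - a) * c.
Proof. exact (RInt_const a b c). Qed.
Lemma RInt_pt g a : RInt g a a = 0.
Proof. exact (RInt_point a g). Qed.
Lemma ChaslesC g a b c : Cg g -> RInt g a b + RInt g b c = RInt g a c.
Proof. intros. exact (RInt_Chasles g a b c (exR g a b H) (exR g b c H)). Qed.

Lemma RInt_leC g h a b : a <= b -> Cg g -> Cg h -> (forall x, a <= x <= b -> g x <= h x) ->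
  RInt g a b <= RInt h a b.
Proof. intros. apply RInt_le; auto; try (apply exR; auto). intros; apply H2; lra. Qed.

Lemma RInt_ge0C g a b : a <= b -> Cg g -> (forall x, a <= x <= b -> 0 <= g x) -> 0 <= RInt g a b.
Proof. intros. apply RInt_ge_0; auto; try (apply exR; auto). intros; apply H1; lra. Qed.

Lemma RInt_absC g a b M : a <= b -> Cg g -> (forall x, a <= x <= b -> Rabs (g x) <= M) ->
  Rabs (RInt g a b) <= (b - a) * M.
Proof. intros. apply abs_RInt_le_const; auto. apply exR; auto. Qed.

Lemma antider (F g : R -> R) (a b : R) : (forall x, is_derive F x (g x)) -> Cg g -> RInt g a b = F b - F a.
Proof.
intros HF Hg. apply is_RInt_unique. exact (is_RInt_derive F g a b (fun x _ => HF x) (fun x _ => Hg x)).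
Qed.

Lemma d_eq (f : R -> R) (x l l' : R) : is_derive f x l -> l = l' -> is_derive f x l'.
Proof. intros H ->; auto. Qed.
Lemma d_mul (f g : R -> R) (x a b : R) : is_derive f x a -> is_derive g x b ->
  is_derive (fun y => f y * g y) x (a * g x + f x * b).
Proof. intros. eapply d_eq. apply (is_derive_mult f g x a b H H0). intros; apply Rmult_comm.
 reflexivity. Qed.
Lemma d_plus (f g : R -> R) (x a b : R) : is_derive f x a -> is_derive g x b -> is_derive (fun y => f y + g y) x (a + b).
Proof. intros. apply (is_derive_plus f g x a b H H0). Qed.
Lemma d_minus (f g : R -> R) (x a b : R) : is_derive f x a -> is_derive g x b -> is_derive (fun y => f y - g y) x (a - b).
Proof. intros. apply (is_derive_minus f g x a b H H0). Qed.
Lemma d_id (x : R) : is_derive (fun y => y) x 1.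
Proof. apply (@is_derive_id R_AbsRing). Qed.
Lemma d_const (c : R) x : is_derive (fun _ => c) x 0.
Proof. apply (is_derive_const c x). Qed.

Lemma DI_L g x : Cg g -> DI g x = x * RInt g 0 x - RInt (fun s => s * g s) 0 x.
Proof.
intros Hg. unfold DI.
assert (Hsg : Cg (fun s => s * g s)) by (apply Cg_mult; [apply Cg_id|auto]).
rewrite (antider (fun y => y * RInt g 0 y - RInt (fun s => s * g s) 0 y) (fun y => RInt g 0 y)).
- rewrite !RInt_pt. rewrite Rmult_0_l. lra.
- intros y. eapply d_eq. apply d_minus. apply d_mul. apply d_id. apply prim_der; auto.
  apply (prim_der (fun s => s * g s)); auto. rring.
- apply prim_C; auto.
Qed.

Lemma DI_ker g x : Cg g -> DI g x = RInt (fun s => (x - s) * g s) 0 x.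
Proof.
intros Hg. rewrite DI_L; auto.
rewrite (RInt_extR (fun s => (x - s) * g s) (fun s => x * g s - s * g s)) by (intros; ring).
rewrite RInt_minusC. rewrite RInt_scalC; auto.
apply Cg_mult; [apply Cg_const|auto]. apply Cg_mult; [apply Cg_id|auto].
Qed.

Lemma DI2_ker g x : Cg g -> RInt (DI g) 0 x = RInt (fun s => (x - s)^2 / 2 * g s) 0 x.
Proof.
intros Hg.
assert (H1 : Cg (fun s => s * g s)) by (apply Cg_mult; [apply Cg_id|auto]).
assert (H2 : Cg (fun s => s^2 * g s)) by (apply Cg_mult; [apply Cg_mult; [apply Cg_id|apply Cg_mult; [apply Cg_id|apply Cg_const]] |auto]).
rewrite (antider (fun y => y^2/2 * RInt g 0 y - y * RInt (fun s => s * g s) 0 y + /2 * RInt (fun s => s^2 * g s) 0 y) (DI g)).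
- rewrite !RInt_pt.
  rewrite (RInt_extR (fun s => (x - s)^2 / 2 * g s) (fun s => x^2/2 * g s - x * (s * g s) + /2 * (s^2 * g s))) by (intros; field).
  rewrite RInt_plusC, RInt_minusC, !RInt_scalC; auto. rring.
  apply Cg_mult; [apply Cg_const|auto]. apply Cg_mult; [apply Cg_const|auto].
  apply Cg_minus; apply Cg_mult; try apply Cg_const; auto.
  apply Cg_mult; try apply Cg_const; auto.
- intros y. rewrite DI_L; auto. eapply d_eq. apply d_plus. apply d_minus.
  apply d_mul. 2: apply prim_der; auto.
  assert (is_derive (fun y => y^2/2) y y) by (auto_derive; [auto|field]). exact H.
  apply d_mul. apply d_id. apply (prim_der (fun s => s * g s)); auto.
  apply (is_derive_scal (fun y => RInt (fun s => s^2 * g s) 0 y)). apply (prim_der (fun s => s^2 * g s)); auto.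
  rfield.
- apply DI_C; auto.
Qed.

Lemma prim_mono g t t' : Cg g -> (forall s, t <= s <= t' -> 0 <= g s) -> t <= t' -> RInt g 0 t <= RInt g 0 t'.
Proof.
intros Hg Hp Htt. rewrite <- (ChaslesC g 0 t t'); auto.
assert (0 <= RInt g t t') by (apply RInt_ge0C; auto). lra.
Qed.

Lemma AVG G T t : Cg G -> 0 <= t <= T -> (forall x y, 0 <= x <= y -> y <= T -> G x <= G y) ->
  T * RInt G 0 t <= t * RInt G 0 T.
Proof.
intros HG Ht Hm.
rewrite <- (ChaslesC G 0 t T); auto.
assert (A1 : RInt G 0 t <= RInt (fun _ => G t) 0 t) by (apply RInt_leC; [lra| auto| apply Cg_const| intros; apply Hm; lra]).
assert (A2 : RInt (fun _ => G t) t T <= RInt G t T) by (apply RInt_leC; [lra| apply Cg_const| auto| intros; apply Hm; lra]).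
rewrite !RInt_constR in *.
assert (A3 : (T - t) * RInt G 0 t <= (T - t) * ((t - 0) * G t)) by (apply Rmult_le_compat_l; lra).
assert (A4 : t * ((T - t) * G t) <= t * RInt G t T) by (apply Rmult_le_compat_l; lra).
nra.
Qed.

Lemma DI_diff g h T e : 0 <= T -> Cg g -> Cg h -> (forall s, 0 <= s <= T -> Rabs (g s - h s) <= e) ->
  forall t, 0 <= t <= T -> Rabs (DI g t - DI h t) <= T * (T * e).
Proof.
intros HT Hg Hh He t Ht. unfold DI.
rewrite <- RInt_minusC by (apply prim_C; auto).
assert (He0 : 0 <= e) by (specialize (He 0); assert (0 <= Rabs (g 0 - h 0)) by apply Rabs_pos; lra).
eapply Rle_trans. apply RInt_absC with (M := T * e). lra.
apply Cg_minus; apply prim_C; auto.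
intros x Hx. rewrite <- RInt_minusC by auto.
eapply Rle_trans. apply RInt_absC with (M := e). lra. apply Cg_minus; auto.
intros; apply He; lra. apply Rmult_le_compat_r; lra.
apply Rmult_le_compat_r. nra. lra.
Qed.


Fixpoint V (ab Fe : R -> R) (d c : R) (k : nat) : R -> R :=
  match k with
  | O => fun _ => c
  | S k => fun t => c - DI (fun s => ab s * Fe (V ab Fe d c k (Rmax (s - d) 0))) t
  end.

Definition gk ab Fe d c k := fun s => ab s * Fe (V ab Fe d c k (Rmax (s - d) 0)).

Lemma V_S ab Fe d c k t : V ab Fe d c (S k) t = c - DI (gk ab Fe d c k) t.
Proof. reflexivity. Qed.

Lemma Cg_shift d : Cg (fun s => Rmax (s - d) 0).
Proof. apply (Cg_comp (fun s => s - d) (fun y => Rmax y 0)). apply Cg_minus. apply Cg_id. apply Cg_const. apply Cg_max0. Qed.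

Lemma V_C ab Fe d c k : Cg ab -> Cg Fe -> Cg (V ab Fe d c k).
Proof.
intros Ha HF. induction k; simpl.
- apply Cg_const.
- apply Cg_minus. apply Cg_const. apply DI_C. apply Cg_mult; auto.
  apply (Cg_comp _ Fe); auto. apply (Cg_comp _ (V ab Fe d c k)); auto. apply Cg_shift.
Qed.

Lemma gk_C ab Fe d c k : Cg ab -> Cg Fe -> Cg (gk ab Fe d c k).
Proof. intros. unfold gk. apply Cg_mult; auto. apply (Cg_comp _ Fe); auto.
apply (Cg_comp _ (V ab Fe d c k)). apply Cg_shift. apply V_C; auto. Qed.

Lemma DI_0 t : DI (fun _ => 0) t = 0.
Proof. unfold DI. rewrite (RInt_extR (fun u => RInt (fun _ => 0) 0 u) (fun _ => 0)).
rewrite RInt_constR. ring. intros. rewrite RInt_constR. ring. Qed.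

Lemma V_inv ab Fe d c k t : 0 < d -> 0 <= t <= INR k * d ->
  V ab Fe d c (S k) t = V ab Fe d c k t.
Proof.
intros Hd. revert t. induction k; intros t Ht.
- simpl in Ht. assert (t = 0) by lra. subst. simpl. unfold DI. rewrite RInt_pt. ring.
- rewrite V_S. change (V ab Fe d c (S k) t) with (c - DI (gk ab Fe d c k) t). f_equal.
  rewrite S_INR in Ht. unfold DI. apply RInt_ext. intros x Hx.
  rewrite Rmin_left in Hx by lra. rewrite Rmax_right in Hx by lra.
  apply RInt_ext. intros s Hs. rewrite Rmin_left in Hs by lra. rewrite Rmax_right in Hs by lra.
  unfold gk. rewrite IHk. reflexivity. assert (0 <= Rmax (s-d) 0) by apply Rmax_r. assert (Rmax (s-d) 0 <= INR k * d) by (pose proof (pos_INR k); apply Rmax_lub; nra). lra.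
Qed.

Lemma DI_mono g t t' : Cg g -> (forall s, 0 <= s -> 0 <= g s) -> 0 <= t <= t' -> DI g t <= DI g t'.
Proof.
intros Hg Hp Ht. unfold DI. apply prim_mono. apply prim_C; auto.
intros s Hs. assert (RInt g 0 0 <= RInt g 0 s). apply prim_mono; auto. intros; apply Hp; lra. lra.
rewrite RInt_pt in H. auto. lra.
Qed.

Lemma DI_nonneg g t : Cg g -> (forall s, 0 <= s -> 0 <= g s) -> 0 <= t -> 0 <= DI g t.
Proof. intros. assert (DI g 0 <= DI g t) by (apply DI_mono; auto; lra). unfold DI at 1 in H2.
rewrite RInt_pt in H2. auto. Qed.

Lemma DI_bound g T B t : 0 <= T -> Cg g -> (forall s, 0 <= s <= T -> 0 <= g s <= B) -> 0 <= t <= T ->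
  DI g t <= T * (T * B).
Proof.
intros HT Hg Hb Ht. assert (H := DI_diff g (fun _ => 0) T B HT Hg (Cg_const 0)).
assert (Rabs (DI g t - DI (fun _ => 0) t) <= T * (T * B)). apply H; auto.
intros s Hs. rewrite Rminus_0_r. rewrite Rabs_right. apply Hb; auto. apply Rle_ge, Hb; auto.
rewrite DI_0 in H0. apply abs_le_e in H0. lra.
Qed.

Lemma pmq (p q : R) : p + q - p = q.
Proof. ring. Qed.

Lemma DI_lip g T B t t' : 0 <= T -> Cg g -> (forall s, 0 <= s <= T -> 0 <= g s <= B) ->
  0 <= t <= T -> 0 <= t' <= T -> Rabs (DI g t - DI g t') <= T * B * Rabs (t - t').
Proof.
intros HT Hg Hb.
assert (key : forall t t', 0 <= t <= t' -> t' <= T -> Rabs (DI g t' - DI g t) <= T * B * (t' - t)).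
{ intros x y Hxy HyT. unfold DI. rewrite <- (ChaslesC _ 0 x y) by (apply prim_C; auto).
  rewrite pmq.
  eapply Rle_trans. apply RInt_absC with (M := T * B). lra. apply prim_C; auto.
  intros u Hu. assert (0 <= RInt g 0 u <= RInt (fun _ => B) 0 u).
  { split. assert (RInt g 0 0 <= RInt g 0 u) by (apply prim_mono; auto; [intros; apply Hb; lra| lra]).
    rewrite RInt_pt in H. auto. apply RInt_leC; auto. lra. apply Cg_const. intros; apply Hb; lra. }
  rewrite RInt_constR in H. rewrite Rabs_right by lra.
  assert (0 <= B) by (specialize (Hb 0); lra). nra. nra. }
intros Ht Ht'. destruct (Rle_dec t t').
- rewrite Rabs_minus_sym. rewrite (Rabs_minus_sym t t'). rewrite (Rabs_right (t' - t)) by lra. apply key; lra.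
- rewrite (Rabs_right (t - t')) by lra. apply key; lra.
Qed.


Lemma gk_nonneg ab Fe d c k : (forall s, 0 <= ab s) -> (forall x, 0 <= Fe x) -> forall s, 0 <= gk ab Fe d c k s.
Proof. intros. unfold gk. apply Rmult_le_pos; auto. Qed.

Lemma V_upper ab Fe d c k t : Cg ab -> Cg Fe -> (forall s, 0 <= ab s) -> (forall x, 0 <= Fe x) -> 0 <= t ->
  V ab Fe d c k t <= c.
Proof.
intros. destruct k. simpl; lra. rewrite V_S.
assert (0 <= DI (gk ab Fe d c k) t). apply DI_nonneg; auto. apply gk_C; auto. intros; apply gk_nonneg; auto. lra.
Qed.

Lemma shift_in d T s : 0 < d -> 0 <= s <= T -> 0 <= Rmax (s - d) 0 <= T.
Proof. intros. split. apply Rmax_r. apply Rmax_lub; lra. Qed.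

Lemma gk_bound ab Fe d c k T A M C : 0 < d -> Cg ab -> Cg Fe -> (forall s, 0 <= ab s) -> (forall x, 0 <= Fe x) ->
  (forall s, 0 <= s <= T -> ab s <= A) -> (forall x, x <= C -> Fe x <= M) -> c <= C ->
  forall s, 0 <= s <= T -> 0 <= gk ab Fe d c k s <= A * M.
Proof.
intros. split. apply gk_nonneg; auto. unfold gk.
assert (V ab Fe d c k (Rmax (s - d) 0) <= c) by (apply V_upper; auto; apply Rmax_r).
assert (Fe (V ab Fe d c k (Rmax (s - d) 0)) <= M) by (apply H5; lra).
apply Rmult_le_compat; auto.
Qed.

Lemma V_lower ab Fe d c k T A M C t : 0 < d -> 0 <= T -> 0 <= A -> 0 <= M -> Cg ab -> Cg Fe -> (forall s, 0 <= ab s) -> (forall x, 0 <= Fe x) ->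
  (forall s, 0 <= s <= T -> ab s <= A) -> (forall x, x <= C -> Fe x <= M) -> c <= C -> 0 <= t <= T ->
  c - T * (T * (A * M)) <= V ab Fe d c k t.
Proof.
intros. destruct k. simpl. assert (0 <= T * (T * (A * M))) by (repeat apply Rmult_le_pos; auto). lra.
rewrite V_S. assert (DI (gk ab Fe d c k) t <= T * (T * (A * M))). apply DI_bound; auto.
apply gk_C; auto. intros; eapply gk_bound; eauto. lra.
Qed.

Lemma V_lip ab Fe d c k T A M C t t' : 0 < d -> 0 <= T -> 0 <= A -> 0 <= M -> Cg ab -> Cg Fe -> (forall s, 0 <= ab s) -> (forall x, 0 <= Fe x) ->
  (forall s, 0 <= s <= T -> ab s <= A) -> (forall x, x <= C -> Fe x <= M) -> c <= C -> 0 <= t <= T -> 0 <= t' <= T ->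
  Rabs (V ab Fe d c k t - V ab Fe d c k t') <= T * (A * M) * Rabs (t - t').
Proof.
intros. destruct k. simpl. rewrite Rminus_diag_eq, Rabs_R0 by auto. assert (0 <= Rabs (t - t')) by apply Rabs_pos.
assert (0 <= T * (A * M)) by (repeat apply Rmult_le_pos; auto). nra.
rewrite !V_S. replace (c - DI (gk ab Fe d c k) t - (c - DI (gk ab Fe d c k) t')) with (DI (gk ab Fe d c k) t' - DI (gk ab Fe d c k) t) by ring.
rewrite Rabs_minus_sym.
apply DI_lip; auto. apply gk_C; auto. intros; eapply gk_bound; eauto.
Qed.

Lemma V_mono ab Fe d c k t t' : Cg ab -> Cg Fe -> (forall s, 0 <= ab s) -> (forall x, 0 <= Fe x) -> 0 <= t <= t' ->
  V ab Fe d c k t' <= V ab Fe d c k t.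
Proof.
intros. destruct k. simpl; lra. rewrite !V_S.
assert (DI (gk ab Fe d c k) t <= DI (gk ab Fe d c k) t'). apply DI_mono; auto. apply gk_C; auto.
intros; apply gk_nonneg; auto. lra.
Qed.

Lemma V_contc ab Fe d T A (MC : R -> R) k : 0 < d -> 0 <= T -> 0 <= A -> Cg ab -> Cg Fe ->
  (forall s, 0 <= ab s) -> (forall x, 0 <= Fe x) -> (forall s, 0 <= s <= T -> ab s <= A) ->
  (forall C, 0 <= MC C /\ forall x, x <= C -> Fe x <= MC C) ->
  forall c0 e, 0 < e -> exists dl, 0 < dl /\ forall c, Rabs (c - c0) < dl ->
     forall t, 0 <= t <= T -> Rabs (V ab Fe d c k t - V ab Fe d c0 k t) < e.
Proof.
intros Hd HT HA Hab HF Hab0 HF0 HabA HM.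
induction k; intros c0 e He.
- exists e. split; auto. intros. simpl. auto.
- set (C := c0 + 1). destruct (HM C) as [HM0 HMC]. set (M := MC C).
  set (lo := c0 - 1 - T * (T * (A * M))).
  set (e1 := e / (2 * (T * (T * A) + 1))).
  assert (HTA : 0 <= T * (T * A)) by (repeat apply Rmult_le_pos; auto).
  assert (He1 : 0 < e1) by (unfold e1; apply Rdiv_lt_0_compat; lra).
  destruct (unif_cont Fe lo C HF e1 He1) as [d1 [Hd1 Hu]].
  destruct (IHk c0 d1 Hd1) as [d2 [Hd2 H2]].
  exists (Rmin d2 (Rmin 1 (e / 2))). split. apply Rmin_pos; auto. apply Rmin_pos; lra.
  intros c Hc t Ht.
  assert (Hc2 : Rabs (c - c0) < d2) by (eapply Rlt_le_trans; [exact Hc| apply Rmin_l]).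
  assert (Hc1 : Rabs (c - c0) < 1) by (eapply Rlt_le_trans; [exact Hc| eapply Rle_trans; [apply Rmin_r|apply Rmin_l]]).
  assert (Hce : Rabs (c - c0) < e / 2) by (eapply Rlt_le_trans; [exact Hc| eapply Rle_trans; [apply Rmin_r|apply Rmin_r]]).
  apply abs_lt_e in Hc1.
  change (fun s => ab s * Fe (V ab Fe d c k (Rmax (s - d) 0))) with (gk ab Fe d c k). change (fun s => ab s * Fe (V ab Fe d c0 k (Rmax (s - d) 0))) with (gk ab Fe d c0 k).
  assert (Hdi : Rabs (DI (gk ab Fe d c k) t - DI (gk ab Fe d c0 k) t) <= T * (T * (A * e1))).
  { apply DI_diff; auto. apply gk_C; auto. apply gk_C; auto.
    intros s Hs. unfold gk. rewrite <- Rmult_minus_distr_l. rewrite Rabs_mult.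
    rewrite (Rabs_right (ab s)) by (apply Rle_ge; auto).
    apply Rmult_le_compat; auto. apply Rabs_pos. left. apply Hu.
    - pose proof (shift_in d T s Hd Hs).
      split. unfold lo. assert (c - T * (T * (A * M)) <= V ab Fe d c k (Rmax (s - d) 0)).
      apply (V_lower ab Fe d c k T A M C); auto; unfold C; lra. lra.
      assert (V ab Fe d c k (Rmax (s - d) 0) <= c) by (apply V_upper; auto; lra). unfold C; lra.
    - pose proof (shift_in d T s Hd Hs).
      split. unfold lo. assert (c0 - T * (T * (A * M)) <= V ab Fe d c0 k (Rmax (s - d) 0)).
      apply (V_lower ab Fe d c0 k T A M C); auto; unfold C; lra.
      assert (0 <= T * (T * (A * M))) by (repeat apply Rmult_le_pos; auto). lra.
      assert (V ab Fe d c0 k (Rmax (s - d) 0) <= c0) by (apply V_upper; auto; lra). unfold C; lra.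
    - apply H2; auto. apply shift_in; auto. }
  assert (T * (T * (A * e1)) < e / 2).
  { replace (T * (T * (A * e1))) with (T * (T * A) * e1) by ring. unfold e1.
    apply Rmult_lt_reg_r with (2 * (T * (T * A) + 1)). lra.
    field_simplify. nra. lra. }
  replace (c - DI (gk ab Fe d c k) t - (c0 - DI (gk ab Fe d c0 k) t)) with
    ((c - c0) - (DI (gk ab Fe d c k) t - DI (gk ab Fe d c0 k) t)) by ring.
  eapply Rle_lt_trans. apply Rabs_triang. rewrite Rabs_Ropp. lra.
Qed.


Definition Phi ab Fe d T al eta K c := V ab Fe d c K T - al * RInt (V ab Fe d c K) 0 eta.

Lemma Phi_cont ab Fe d T A (MC : R -> R) al eta K : 0 < d -> 0 <= T -> 0 <= A -> Cg ab -> Cg Fe ->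
  (forall s, 0 <= ab s) -> (forall x, 0 <= Fe x) -> (forall s, 0 <= s <= T -> ab s <= A) ->
  (forall C, 0 <= MC C /\ forall x, x <= C -> Fe x <= MC C) -> 0 <= al -> 0 <= eta <= T ->
  forall c0, continuity_pt (Phi ab Fe d T al eta K) c0.
Proof.
intros Hd HT HA Hab HF Hab0 HF0 HabA HM Hal Heta c0.
unfold continuity_pt, continue_in, limit1_in, limit_in. intros e He.
set (e' := e / (2 * (1 + al * eta))).
assert (Hae : 0 <= al * eta) by nra.
assert (He' : 0 < e') by (unfold e'; apply Rdiv_lt_0_compat; lra).
destruct (V_contc ab Fe d T A MC K Hd HT HA Hab HF Hab0 HF0 HabA HM c0 e' He') as [dl [Hdl H]].
exists dl. split; auto. intros c [_ Hc]. simpl in *. unfold R_dist in *.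
unfold Phi.
assert (H1 : Rabs (V ab Fe d c K T - V ab Fe d c0 K T) < e') by (apply H; auto; lra).
assert (H2 : Rabs (RInt (V ab Fe d c K) 0 eta - RInt (V ab Fe d c0 K) 0 eta) <= eta * e').
{ rewrite <- RInt_minusC by (apply V_C; auto). replace (eta * e') with ((eta - 0) * e') by ring.
  apply RInt_absC. lra. apply Cg_minus; apply V_C; auto. intros x Hx. left. apply H; auto. lra. }
replace (V ab Fe d c K T - al * RInt (V ab Fe d c K) 0 eta - (V ab Fe d c0 K T - al * RInt (V ab Fe d c0 K) 0 eta))
  with ((V ab Fe d c K T - V ab Fe d c0 K T) - al * (RInt (V ab Fe d c K) 0 eta - RInt (V ab Fe d c0 K) 0 eta)) by ring.
eapply Rle_lt_trans. apply Rabs_triang. rewrite Rabs_Ropp, Rabs_mult, (Rabs_right al) by lra.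
assert (al * Rabs (RInt (V ab Fe d c K) 0 eta - RInt (V ab Fe d c0 K) 0 eta) <= al * (eta * e')) by (apply Rmult_le_compat_l; lra).
assert (e' * (2 * (1 + al * eta)) = e) by (unfold e'; field; lra).
nra.
Qed.

Definition Bk T al eta (g : R -> R) := RInt (fun s => (T - s) * g s) 0 T - al * RInt (fun s => (eta - s)^2 / 2 * g s) 0 eta.

Lemma Phi_formula ab Fe d T al eta n c : Cg ab -> Cg Fe ->
  Phi ab Fe d T al eta (S n) c = c * (1 - al * eta) - Bk T al eta (gk ab Fe d c n).
Proof.
intros Hab HF. unfold Phi, Bk.
assert (Hg := gk_C ab Fe d c n Hab HF).
rewrite V_S. rewrite <- DI_ker, <- DI2_ker by auto.
rewrite (RInt_extR (V ab Fe d c (S n)) (fun t => c - DI (gk ab Fe d c n) t)) by (intros; apply V_S).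
rewrite RInt_minusC. rewrite RInt_constR. ring. apply Cg_const. apply DI_C; auto.
Qed.

Lemma Cg_Tg T g : Cg g -> Cg (fun s => (T - s) * g s).
Proof. intros. apply Cg_mult; auto. apply Cg_minus. apply Cg_const. apply Cg_id. Qed.
Lemma Cg_eg eta g : Cg g -> Cg (fun s => (eta - s)^2 / 2 * g s).
Proof. intros. apply Cg_mult; auto. apply Cg_mult. apply Cg_mult. apply Cg_minus. apply Cg_const. apply Cg_id.
apply Cg_mult. apply Cg_minus. apply Cg_const. apply Cg_id. apply Cg_const. apply Cg_const. Qed.

Lemma Bk_nonneg T al eta h : Cg h -> 0 <= al -> 0 <= eta <= T -> al * eta <= 1 ->
  (forall s, 0 <= s <= T -> 0 <= h s) -> 0 <= Bk T al eta h.
Proof.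
intros Hh Hal Heta Hae Hp. unfold Bk.
rewrite <- (ChaslesC _ 0 eta T) by (apply Cg_Tg; auto).
assert (0 <= RInt (fun s => (T - s) * h s) eta T) by (apply RInt_ge0C; try lra; [apply Cg_Tg; auto| intros; apply Rmult_le_pos; [lra| apply Hp; lra]]).
rewrite <- RInt_scalC by (apply Cg_eg; auto).
assert (RInt (fun s => al * ((eta - s) ^ 2 / 2 * h s)) 0 eta <= RInt (fun s => (T - s) * h s) 0 eta).
{ apply RInt_leC. lra. apply (Cg_mult (fun _ => al)). apply Cg_const. apply Cg_eg; auto. apply Cg_Tg; auto.
  intros s Hs. assert (0 <= h s) by (apply Hp; lra).
  assert (al * ((eta - s)^2/2) <= T - s).
  { assert (al * (eta - s) <= 1) by nra. nra. }
  replace (al * ((eta - s) ^ 2 / 2 * h s)) with (al * ((eta - s) ^ 2 / 2)* h s) by ring.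
  apply Rmult_le_compat_r; auto. }
lra.
Qed.

Lemma Bk_minus T al eta g h : Cg g -> Cg h -> Bk T al eta (fun s => g s - h s) = Bk T al eta g - Bk T al eta h.
Proof.
intros. unfold Bk.
rewrite (RInt_extR (fun s => (T - s) * (g s - h s)) (fun s => (T - s) * g s - (T - s) * h s)) by (intros; ring).
rewrite (RInt_extR (fun s => (eta - s)^2/2 * (g s - h s)) (fun s => (eta - s)^2/2 * g s - (eta - s)^2/2 * h s)) by (intros; ring).
rewrite !RInt_minusC; try (apply Cg_Tg; auto); try (apply Cg_eg; auto). ring.
Qed.

Lemma Bk_scal T al eta g q : Cg g -> Bk T al eta (fun s => q * g s) = q * Bk T al eta g.
Proof.
intros. unfold Bk.
rewrite (RInt_extR (fun s => (T - s) * (q * g s)) (fun s => q * ((T - s) * g s))) by (intros; ring).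
rewrite (RInt_extR (fun s => (eta - s)^2/2 * (q * g s)) (fun s => q * ((eta - s)^2/2 * g s))) by (intros; ring).
rewrite !RInt_scalC; try (apply Cg_Tg; auto); try (apply Cg_eg; auto). ring.
Qed.

Lemma Bk_mono T al eta g h : Cg g -> Cg h -> 0 <= al -> 0 <= eta <= T -> al * eta <= 1 ->
  (forall s, 0 <= s <= T -> h s <= g s) -> Bk T al eta h <= Bk T al eta g.
Proof.
intros. assert (0 <= Bk T al eta (fun s => g s - h s)). apply Bk_nonneg; auto. apply Cg_minus; auto.
intros s Hs; specialize (H4 s Hs); lra.
rewrite Bk_minus in H5; auto. lra.
Qed.

Lemma Bk_upper T al eta g : Cg g -> 0 <= al -> 0 <= eta <= T -> (forall s, 0 <= g s) ->
  Bk T al eta g <= RInt (fun s => (T - s) * g s) 0 T.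
Proof.
intros. unfold Bk. assert (0 <= RInt (fun s => (eta - s) ^ 2 / 2 * g s) 0 eta).
apply RInt_ge0C. lra. apply Cg_eg; auto. intros. apply Rmult_le_pos; auto.
assert (0 <= (eta - x)^2) by apply pow2_ge_0. lra. nra.
Qed.

Lemma large_lower T al eta g c : Cg g -> (forall s, 0 <= s -> 0 <= g s) -> 0 < al -> 0 < eta < T -> al * eta < 1 ->
  c - DI g T >= al * (eta * c - RInt (DI g) 0 eta) ->
  forall t, 0 <= t <= T -> (c - DI g t) * (2 * T - al * eta^2) >= c * (al * eta * (2 * T - eta)).
Proof.
intros Hg Hp Hal Heta Hae HPhi t Ht.
set (I := DI g T). assert (HIe : I = DI g T) by reflexivity. rewrite <- HIe in HPhi.
assert (Hchord : forall x, 0 <= x <= T -> T * DI g x <= x * I).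
{ intros x Hx. unfold I, DI. apply AVG; auto. apply prim_C; auto. intros; apply prim_mono; auto.
  intros; apply Hp; lra. lra. }
assert (HJ : RInt (DI g) 0 eta <= RInt (fun x => x / T * I) 0 eta).
{ apply RInt_leC. lra. apply DI_C; auto. apply Cg_mult. apply Cg_mult. apply Cg_id. apply Cg_const. apply Cg_const.
  intros x Hx. specialize (Hchord x ltac:(lra)). apply Rmult_le_reg_l with T. lra.
  replace (T * (x / T * I)) with (x * I) by (field; lra). auto. }
rewrite (antider (fun x => x^2 / (2 * T) * I) (fun x => x / T * I)) in HJ.
2: { intros x. auto_derive. auto. field. lra. }
2: { apply Cg_mult. apply Cg_mult. apply Cg_id. apply Cg_const. apply Cg_const. }
assert (Hmono : DI g t <= I) by (apply DI_mono; auto; lra).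
assert (HI : I * (2 * T - al * eta^2) <= c * (1 - al * eta) * (2 * T)).
{ assert (Z0 : 0 ^ 2 / (2 * T) * I = 0) by (field; lra).
  assert (Z1 : al * RInt (DI g) 0 eta <= al * (eta ^ 2 / (2 * T) * I)) by (apply Rmult_le_compat_l; lra).
  assert (Z2 : c - I >= al * eta * c - al * eta^2 / (2*T) * I) by lra.
  apply Rmult_ge_compat_r with (r := 2 * T) in Z2; [|lra].
  replace ((al * eta * c - al * eta ^ 2 / (2 * T) * I) * (2 * T)) with (2 * T * al * eta * c - al * eta^2 * I) in Z2 by (field; lra).
  nra. }
assert (Hpos : 0 < 2 * T - al * eta^2) by nra.
assert ((c - DI g t) * (2 * T - al * eta ^ 2) >= (c - I) * (2 * T - al * eta ^ 2)) by nra.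
nra.
Qed.


Lemma Lip_Cg h L : (forall x y, Rabs (h x - h y) <= L * Rabs (x - y)) -> Cg h.
Proof.
intros H x. apply continuity_pt_filterlim.
unfold continuity_pt, continue_in, limit1_in, limit_in. intros e He.
assert (HL : 0 <= L). { specialize (H 1 0). assert (0 <= Rabs (h 1 - h 0)) by apply Rabs_pos.
  rewrite Rminus_0_r, Rabs_R1 in H. lra. }
exists (e / (L + 1)). split. apply Rdiv_lt_0_compat; lra.
intros y [_ Hy]. simpl in *. unfold R_dist in *.
eapply Rle_lt_trans. apply H.
apply Rle_lt_trans with ((L + 1) * Rabs (y - x)). assert (0 <= Rabs (y - x)) by apply Rabs_pos. nra.
apply Rmult_lt_reg_r with (/ (L + 1)). apply Rinv_0_lt_compat; lra.
replace ((L + 1) * Rabs (y - x) * / (L + 1)) with (Rabs (y - x)) by (field; lra).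
replace (e * / (L + 1)) with (e / (L + 1)) by (unfold Rdiv; ring). auto.
Qed.

Lemma clamp_lip T x y : 0 <= T -> Rabs (clamp T x - clamp T y) <= Rabs (x - y).
Proof.
intros HT. unfold clamp, Rmax, Rmin.
destruct (Rle_dec x T); destruct (Rle_dec y T); destruct (Rle_dec 0 x); destruct (Rle_dec 0 y);
repeat (destruct Rle_dec); apply Rabs_le; 
(destruct (Rcase_abs (x - y)); [rewrite Rabs_left|rewrite Rabs_right]); lra.
Qed.

Lemma grid T m t : 0 < T -> (0 < m)%nat -> 0 <= t <= T ->
  exists i, (i <= m)%nat /\ Rabs (t - INR i * (T / INR m)) <= T / INR m.
Proof.
intros HT Hm Ht.
assert (Hpos : 0 < INR m) by (apply lt_0_INR; auto).
assert (Hh : 0 < T / INR m) by (apply Rdiv_lt_0_compat; auto).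
assert (key : forall j, (j <= m)%nat -> t <= INR j * (T / INR m) -> exists i, (i <= m)%nat /\ Rabs (t - INR i * (T / INR m)) <= T / INR m).
{ induction j; intros Hj Htj.
  - exists 0%nat. split. lia. simpl in *. rewrite Rmult_0_l, Rminus_0_r. rewrite Rabs_right; lra.
  - destruct (Rle_dec t (INR j * (T / INR m))). apply IHj; auto. lia.
    exists (S j). split; auto. rewrite S_INR in *. apply Rabs_le. split; nra. }
apply (key m). lia. replace (INR m * (T / INR m)) with T by (field; lra). lra.
Qed.

Lemma eps_zero x K : 0 <= K -> (forall e, 0 < e -> Rabs x <= K * e) -> x = 0.
Proof.
intros HK H. destruct (Req_dec x 0); auto. exfalso.
assert (Hx : 0 < Rabs x) by (apply Rabs_pos_lt; auto).
specialize (H (Rabs x / (2 * (K + 1)))). assert (0 < Rabs x / (2 * (K + 1))) by (apply Rdiv_lt_0_compat; lra).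
specialize (H H1). assert (K * (Rabs x / (2 * (K + 1))) < Rabs x).
{ apply Rmult_lt_reg_r with (2 * (K + 1)). lra. field_simplify; try lra. nra. }
lra.
Qed.

Lemma DI_ext g h t : (forall s, g s = h s) -> DI g t = DI h t.
Proof. intros. unfold DI. apply RInt_extR. intros. apply RInt_extR. auto. Qed.

Lemma shift_close d s : 0 < d -> 0 <= s -> Rabs (Rmax (s - d) 0 - s) <= d.
Proof. intros. unfold Rmax. destruct Rle_dec; apply Rabs_le; lra. Qed.

Lemma limit_step U (HU : ultra U) T al eta ab Fe A (c : nat -> R) (u : nat -> R -> R) (dn : nat -> R) clo chi lo hi L :
  0 < T -> 0 <= al -> 0 <= eta <= T -> Cg ab -> Cg Fe -> 0 <= L -> 0 <= A ->
  (forall s, 0 <= s <= T -> 0 <= ab s <= A) ->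
  (forall n, clo <= c n <= chi) ->
  (forall n, Cg (u n)) ->
  (forall n t, 0 <= t <= T -> lo <= u n t <= hi) ->
  (forall n t t', 0 <= t <= T -> 0 <= t' <= T -> Rabs (u n t - u n t') <= L * Rabs (t - t')) ->
  (forall n, 0 < dn n) ->
  (forall e, 0 < e -> exists N, forall n, (N <= n)%nat -> dn n < e) ->
  (forall n t, 0 <= t <= T -> u n t = c n - DI (fun s => ab s * Fe (u n (Rmax (s - dn n) 0))) t) ->
  (forall n, u n T = al * RInt (u n) 0 eta) ->
  exists cL w, clo <= cL <= chi /\
    (forall t, w t = cL - DI (fun s => ab s * Fe (w (clamp T s))) t) /\
    Cg (fun s => ab s * Fe (w (clamp T s))) /\
    w T = al * RInt w 0 eta /\ (forall t, 0 <= t <= T -> lo <= w t <= hi).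
Proof.
intros HT Hal Heta Hab HF HL HA HabA Hc HuC Hb Hlip Hdn0 Hdn Heq HBC.
destruct (ulim_ex U HU c clo chi Hc) as [cL [HcL HcU]].
assert (Hex : forall t, exists l, lo <= l <= hi /\ forall e, 0 < e -> U (fun n => Rabs (u n (clamp T t) - l) < e)).
{ intros t. apply ulim_ex; auto. intros n. apply Hb. apply clamp_in; lra. }
set (uL := fun t => proj1_sig (constructive_indefinite_description _ (Hex t))).
assert (HuL : forall t, lo <= uL t <= hi /\ forall e, 0 < e -> U (fun n => Rabs (u n (clamp T t) - uL t) < e)).
{ intros t. unfold uL. destruct (constructive_indefinite_description _ (Hex t)) as [l Hl]. simpl. exact Hl. }
assert (Hpt : forall t, 0 <= t <= T -> forall e, 0 < e -> U (fun n => Rabs (u n t - uL t) < e)).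
{ intros t Ht e He. destruct (HuL t) as [_ H]. apply (uS _ HU (fun n => Rabs (u n (clamp T t) - uL t) < e)).
  intros n; rewrite clamp_id; auto. apply H; auto. }
assert (HLip : forall t t', 0<=t<=T -> 0<=t'<=T -> Rabs (uL t - uL t') <= L * Rabs (t - t')).
{ intros t t' Ht Ht'. apply Rle_plus_epsilon. intros e He.
  assert (He2 : 0 < e / 2) by lra.
  destruct (U_ex U HU _ (uI _ HU _ _ (Hpt t Ht _ He2) (Hpt t' Ht' _ He2))) as [n [h1 h2]].
  specialize (Hlip n t t' Ht Ht'). apply abs_le_e in Hlip. apply abs_lt_e in h1. apply abs_lt_e in h2.
  apply Rabs_le. lra. }
assert (HCu : Cg (fun s => uL (clamp T s))).
{ apply Lip_Cg with L. intros x y. eapply Rle_trans. apply HLip; apply clamp_in; lra.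
  apply Rmult_le_compat_l; auto. apply clamp_lip; lra. }
set (G := fun s => ab s * Fe (uL (clamp T s))).
assert (HG : Cg G) by (apply Cg_mult; auto; apply (Cg_comp _ Fe); auto).
assert (Hunif : forall e, 0 < e -> U (fun n => forall t, 0 <= t <= T -> Rabs (u n t - uL t) < e)).
{ intros e He.
  assert (He3 : 0 < e / (3 * (T * L + 1))) by (apply Rdiv_lt_0_compat; nra).
  destruct (archimed_cor1 _ He3) as [m [Hm Hm0]].
  assert (Hpos : 0 < INR m) by (apply lt_0_INR; auto).
  set (h := T / INR m).
  assert (Hh : L * h < e / 3).
  { unfold h. replace (L * (T / INR m)) with ((T * L) * / INR m) by (field; lra).
    apply Rle_lt_trans with ((T * L + 1) * / INR m). apply Rmult_le_compat_r. left; apply Rinv_0_lt_compat; auto. lra.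
    apply Rlt_le_trans with ((T * L + 1) * (e / (3 * (T * L + 1)))). apply Rmult_lt_compat_l; auto. nra.
    right. field. nra. }
  assert (Hgp : forall i, (i <= m)%nat -> 0 <= INR i * h <= T).
  { intros i Hi. assert (INR i <= INR m) by (apply le_INR; auto). assert (0 <= INR i) by apply pos_INR.
    assert (0 < h) by (apply Rdiv_lt_0_compat; auto). split. nra.
    assert (INR m * h = T) by (unfold h; field; lra). nra. }
  apply (uS _ HU (fun n => forall i, (i <= m)%nat -> Rabs (u n (INR i * h) - uL (INR i * h)) < e / 3)).
  - intros n Hn t Ht. destruct (grid T m t HT Hm0 Ht) as [i [Hi Hti]].
    fold h in Hti. specialize (Hn i Hi). specialize (Hgp i Hi).
    assert (A1 := Hlip n t (INR i * h) Ht Hgp). assert (A2 := HLip (INR i * h) t Hgp Ht).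
    rewrite (Rabs_minus_sym (INR i * h) t) in A2.
    assert (L * Rabs (t - INR i * h) <= L * h) by (apply Rmult_le_compat_l; auto).
    apply abs_le_e in A1. apply abs_le_e in A2. apply abs_lt_e in Hn. apply Rabs_def1; lra.
  - apply U_fin; auto. intros i Hi. apply Hpt. apply Hgp; auto. lra. }
assert (Hint : forall e, 0 < e -> U (fun n => forall s, 0 <= s <= T -> Rabs (ab s * Fe (u n (Rmax (s - dn n) 0)) - G s) <= e)).
{ intros e He.
  assert (HeA : 0 < e / (A + 1)) by (apply Rdiv_lt_0_compat; lra).
  destruct (unif_cont Fe lo hi HF _ HeA) as [d1 [Hd1 Hu]].
  assert (Hd1' : 0 < d1 / (2 * (L + 1))) by (apply Rdiv_lt_0_compat; lra).
  destruct (Hdn _ Hd1') as [N HN].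
  apply (uS _ HU (fun n => (forall t, 0 <= t <= T -> Rabs (u n t - uL t) < d1/2) /\ (N <= n)%nat)).
  - intros n [H1 H2] s Hs. unfold G. rewrite <- Rmult_minus_distr_l, Rabs_mult.
    set (m := Rmax (s - dn n) 0).
    assert (Hm : 0 <= m <= T) by (apply shift_in; auto).
    assert (Hms : Rabs (m - s) <= dn n) by (apply shift_close; auto; lra).
    specialize (HN n H2).
    assert (B1 : Rabs (u n m - u n s) <= L * Rabs (m - s)) by (apply Hlip; auto).
    assert (B2 : Rabs (u n s - uL s) < d1/2) by auto.
    assert (B3 : L * Rabs (m - s) < d1 / 2).
    { apply Rle_lt_trans with (L * dn n). apply Rmult_le_compat_l; auto.
      apply Rle_lt_trans with (L * (d1 / (2 * (L + 1)))). apply Rmult_le_compat_l; lra.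
      apply Rmult_lt_reg_r with (2 * (L + 1)). lra. field_simplify; try lra; try nra. }
    rewrite (clamp_id T s Hs).
    assert (B4 : Rabs (Fe (u n m) - Fe (uL s)) < e / (A + 1)).
    { apply Hu. apply Hb; auto. apply HuL. apply abs_le_e in B1. apply abs_lt_e in B2. apply Rabs_def1; lra. }
    rewrite Rabs_right by (apply Rle_ge, HabA; auto).
    assert (ab s <= A) by (apply HabA; auto). assert (0 <= ab s) by (apply HabA; auto).
    assert (A * (e / (A + 1)) <= e). { apply Rmult_le_reg_r with (A + 1). lra. field_simplify; lra. }
    assert (0 <= Rabs (Fe (u n m) - Fe (uL s))) by apply Rabs_pos. nra.
  - apply (uI _ HU). apply Hunif; lra. apply (uN _ HU). }
set (w := fun t => cL - DI G t).
assert (Hw : forall t, 0 <= t <= T -> uL t = w t).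
{ intros t Ht. apply (ulim_uniq U HU (fun n => u n t)).
  - intros; apply Hpt; auto.
  - intros e He. set (e' := e / (2 * (T * T + 1))).
    assert (He' : 0 < e') by (unfold e'; apply Rdiv_lt_0_compat; nra).
    assert (He2 : 0 < e / 2) by lra.
    apply (uS _ HU (fun n => Rabs (c n - cL) < e/2 /\ forall s, 0 <= s <= T -> Rabs (ab s * Fe (u n (Rmax (s - dn n) 0)) - G s) <= e')).
    + intros n [H1 H2]. rewrite Heq by auto. unfold w.
      assert (H3 : Rabs (DI (fun s => ab s * Fe (u n (Rmax (s - dn n) 0))) t - DI G t) <= T * (T * e')).
      { apply DI_diff; auto. lra. apply Cg_mult; auto. apply (Cg_comp _ Fe); auto.
        apply (Cg_comp _ (u n)); auto. apply Cg_shift. }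
      assert (H4 : T * (T * e') < e / 2).
      { unfold e'. replace (T * (T * (e / (2 * (T * T + 1))))) with ((T * T) * e / (2 * (T * T + 1))) by (field; nra).
        apply Rmult_lt_reg_r with (2 * (T * T + 1)). nra. field_simplify; nra. }
      apply abs_le_e in H3. apply abs_lt_e in H1. apply Rabs_def1; lra.
    + apply (uI _ HU). apply HcU; auto. apply Hint; auto. }
assert (HwC : Cg w) by (unfold w; apply Cg_minus; [apply Cg_const| apply DI_C; auto]).
exists cL, w. split; auto. split; [| split; [|split]].
- intros t. unfold w at 1. f_equal. apply DI_ext. intros s. unfold G. rewrite Hw; auto. apply clamp_in; lra.
- apply Cg_ext with G. intros s; unfold G; rewrite Hw; auto. apply clamp_in; lra. exact HG.
- apply Rminus_diag_uniq. apply (eps_zero _ (1 + al * eta)). nra.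
  intros e He. destruct (U_ex U HU _ (Hunif e He)) as [n Hn].
  assert (Hn' : forall t, 0 <= t <= T -> Rabs (u n t - w t) < e) by (intros t Ht; rewrite <- Hw; auto).
  assert (H1 : Rabs (RInt (u n) 0 eta - RInt w 0 eta) <= eta * e).
  { rewrite <- RInt_minusC; auto. replace (eta * e) with ((eta - 0) * e) by ring. apply RInt_absC. lra.
    apply Cg_minus; auto. intros x Hx. left. apply Hn'. lra. }
  assert (H2 : Rabs (u n T - w T) < e) by (apply Hn'; lra).
  rewrite HBC in H2. apply abs_le_e in H1. apply abs_lt_e in H2.
  assert (al * (RInt (u n) 0 eta - RInt w 0 eta) <= al * (eta * e)) by (apply Rmult_le_compat_l; lra).
  assert (al * (- (eta * e)) <= al * (RInt (u n) 0 eta - RInt w 0 eta)) by (apply Rmult_le_compat_l; lra).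
  apply Rabs_le. nra.
- intros t Ht. rewrite <- Hw; auto. apply HuL.
Qed.


Lemma ball_R x (e : posreal) y : ball x e y -> Rabs (y - x) < e.
Proof. intros H. unfold ball in H; simpl in H; unfold AbsRing_ball in H; unfold abs, minus, plus, opp in H; simpl in H. exact H. Qed.

Lemma lim0_est f al1 e : filterlim (fun x => f x / x) (at_right 0) (locally al1) -> 0 < e ->
  exists d, 0 < d /\ forall x, 0 < x < d -> Rabs (f x / x - al1) < e.
Proof.
intros H He. specialize (H (ball al1 (mkposreal e He)) (locally_ball _ _)).
unfold filtermap, at_right, within in H. destruct (loc_R _ _ H) as [d [Hd Hd2]].
exists d. split; auto. intros x Hx. apply (ball_R al1 (mkposreal e He)). apply Hd2. rewrite Rminus_0_r, Rabs_right; lra. lra.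
Qed.

Lemma liminf_est f b1 e : filterlim (fun x => f x / x) (Rbar_locally p_infty) (locally b1) -> 0 < e ->
  exists M, forall x, M < x -> Rabs (f x / x - b1) < e.
Proof.
intros H He. specialize (H (ball b1 (mkposreal e He)) (locally_ball _ _)).
unfold filtermap in H. simpl in H. destruct H as [M HM]. exists M. intros x Hx.
apply (ball_R b1 (mkposreal e He)). apply HM; auto.
Qed.

Lemma f0_zero f al1 : cont_on (fun x => 0 <= x) f -> (forall x, 0 <= x -> 0 <= f x) ->
  filterlim (fun x => f x / x) (at_right 0) (locally al1) -> f 0 = 0.
Proof.
intros Hc Hp Hl. assert (H0 : 0 <= f 0) by (apply Hp; lra).
apply Rle_antisym; auto. apply Rle_plus_epsilon. intros e He. rewrite Rplus_0_l.
destruct (lim0_est f al1 1 Hl ltac:(lra)) as [d1 [Hd1 H1]].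
assert (Hc0 := Hc 0 (Rle_refl 0)). specialize (Hc0 (ball (f 0) (mkposreal (e/2) ltac:(lra))) (locally_ball _ _)).
unfold filtermap, within in Hc0. destruct (loc_R _ _ Hc0) as [d2 [Hd2 H2]].
set (x := Rmin (Rmin d1 d2) (e / (2 * (Rabs al1 + 1))) / 2).
assert (Hx0 : 0 < x). { unfold x. assert (0 < e / (2 * (Rabs al1 + 1))). apply Rdiv_lt_0_compat. lra.
  assert (0 <= Rabs al1) by apply Rabs_pos. lra. assert (0 < Rmin (Rmin d1 d2) (e / (2 * (Rabs al1 + 1)))).
  repeat apply Rmin_pos; auto. lra. }
assert (Hx1 : x < d1). { unfold x. assert (Rmin (Rmin d1 d2) (e / (2 * (Rabs al1 + 1))) <= d1).
  eapply Rle_trans. apply Rmin_l. apply Rmin_l. lra. }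
assert (Hx2 : x < d2). { unfold x. assert (Rmin (Rmin d1 d2) (e / (2 * (Rabs al1 + 1))) <= d2).
  eapply Rle_trans. apply Rmin_l. apply Rmin_r. lra. }
assert (Hx3 : x <= e / (2 * (Rabs al1 + 1))). { unfold x. assert (Rmin (Rmin d1 d2) (e / (2 * (Rabs al1 + 1))) <= e / (2 * (Rabs al1 + 1))).
  apply Rmin_r. assert (0 < Rmin (Rmin d1 d2) (e / (2 * (Rabs al1 + 1)))). repeat apply Rmin_pos; auto.
  apply Rdiv_lt_0_compat. lra. assert (0 <= Rabs al1) by apply Rabs_pos. lra. lra. }
assert (A1 : Rabs (f x / x - al1) < 1) by (apply H1; lra).
assert (A2 : Rabs (f x - f 0) < e / 2).
{ apply (ball_R (f 0) (mkposreal (e/2) ltac:(lra))). apply H2. rewrite Rminus_0_r, Rabs_right; lra. lra. }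
apply abs_lt_e in A1. apply abs_lt_e in A2.
assert (f x <= x * (Rabs al1 + 1)).
{ replace (f x) with (x * (f x / x)) by (field; lra). apply Rmult_le_compat_l. lra.
  assert (al1 <= Rabs al1) by apply Rle_abs. lra. }
assert (x * (Rabs al1 + 1) <= e / 2).
{ assert (0 <= Rabs al1) by apply Rabs_pos.
  apply Rle_trans with (e / (2 * (Rabs al1 + 1)) * (Rabs al1 + 1)). apply Rmult_le_compat_r; lra.
  right. field. lra. }
lra.
Qed.

Lemma DI_ext_on g h T t : 0 <= t <= T -> (forall s, 0 <= s <= T -> g s = h s) -> DI g t = DI h t.
Proof.
intros Ht H. unfold DI. apply RInt_ext. intros x Hx. rewrite Rmin_left in Hx by lra. rewrite Rmax_right in Hx by lra.
apply RInt_ext. intros s Hs. rewrite Rmin_left in Hs by lra. rewrite Rmax_right in Hs by lra. apply H; lra.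
Qed.

Lemma RInt_ext_on (g h : R -> R) a b : a <= b -> (forall s, a <= s <= b -> g s = h s) -> RInt g a b = RInt h a b.
Proof. intros. apply RInt_ext. intros x Hx. rewrite Rmin_left in Hx by lra. rewrite Rmax_right in Hx by lra. apply H0; lra. Qed.

Lemma Phi_formula2 ab Fe d T al eta n c : Cg ab -> Cg Fe ->
  Phi ab Fe d T al eta (S n) c = c - DI (gk ab Fe d c n) T - al * (eta * c - RInt (DI (gk ab Fe d c n)) 0 eta).
Proof.
intros Hab HF. unfold Phi.
assert (Hg := gk_C ab Fe d c n Hab HF).
rewrite V_S.
rewrite (RInt_extR (V ab Fe d c (S n)) (fun t => c - DI (gk ab Fe d c n) t)) by (intros; apply V_S).
rewrite RInt_minusC. rewrite RInt_constR. ring. apply Cg_const. apply DI_C; auto.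
Qed.


Theorem corollary5p2 (T eta alpha : R) (f a : R -> R)
  (alpha1 beta1 theta1 theta2 : R) :
  0 < T -> 0 < eta < T -> 0 < alpha < / eta ->
  cont_on (fun x => 0 <= x) f -> (forall x, 0 <= x -> 0 <= f x) ->
  cont_on (Icc 0 T) a -> (forall t, 0 <= t <= T -> 0 <= a t) ->
  (exists t0, 0 <= t0 <= T /\ 0 < a t0) ->
  filterlim (fun x => f x / x) (at_right 0) (locally alpha1) ->
  filterlim (fun x => f x / x) (Rbar_locally p_infty) (locally beta1) ->
  0 < theta1 <= 1 -> 0 <= alpha1 < theta1 * Lambda1 T eta alpha a ->
  1 <= theta2 -> theta2 / gammaP T eta alpha * Lambda2 T eta alpha a < beta1 ->
  exists u : R -> R, positive_solution T eta alpha a f u.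
Proof.
intros HT Heta Hal Hfc Hfp Hac Hap _ Hl0 Hlinf Hth1 Hal1 Hth2 Hb1.
destruct Heta as [Heta0 HetaT]. destruct Hal as [Hal0 Halinv].
assert (Hae : alpha * eta < 1).
{ assert (alpha * eta < / eta * eta) by (apply Rmult_lt_compat_r; lra). rewrite Rinv_l in H by lra. exact H. }
set (ab := fun s => a (clamp T s)).
set (Fe := fun x => f (Rmax x 0)).
assert (Hab : Cg ab).
{ apply (cont_on_comp (Icc 0 T) a (clamp T)). exact Hac. apply Cg_clamp; lra. intros x; unfold Icc; apply clamp_in; lra. }
assert (HF : Cg Fe).
{ apply (cont_on_comp (fun x => 0 <= x) f (fun x => Rmax x 0)). exact Hfc. apply Cg_max0. intros; apply Rmax_r. }
assert (Hab0 : forall s, 0 <= ab s) by (intros; apply Hap; apply clamp_in; lra).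
assert (HF0 : forall x, 0 <= Fe x) by (intros; apply Hfp; apply Rmax_r).
assert (Habe : forall s, 0 <= s <= T -> ab s = a s) by (intros; unfold ab; rewrite clamp_id; auto).
destruct (max_bound ab 0 T Hab ltac:(lra)) as [A0 HA0].
set (A := Rmax A0 0).
assert (HA : 0 <= A) by apply Rmax_r.
assert (HabA : forall s, 0 <= s <= T -> ab s <= A) by (intros; eapply Rle_trans; [apply HA0; auto| apply Rmax_l]).
assert (HMex : forall C, exists M, 0 <= M /\ forall x, x <= C -> Fe x <= M).
{ intros C. destruct (max_bound Fe 0 (Rmax C 0) HF (Rmax_r _ _)) as [M HM]. exists (Rmax M 0). split. apply Rmax_r.
  intros x Hx. assert (E : Fe x = Fe (Rmax x 0)) by (unfold Fe; f_equal; unfold Rmax; repeat destruct Rle_dec; lra).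
  rewrite E. eapply Rle_trans; [apply HM| apply Rmax_l]. split. apply Rmax_r. apply Rmax_lub.
  eapply Rle_trans. exact Hx. apply Rmax_l. apply Rmax_r. }
set (MC := fun C => proj1_sig (constructive_indefinite_description _ (HMex C))).
assert (HMC : forall C, 0 <= MC C /\ forall x, x <= C -> Fe x <= MC C).
{ intros C. unfold MC. destruct (constructive_indefinite_description _ (HMex C)) as [M HM]. exact HM. }
assert (Hf0 : f 0 = 0) by (eapply f0_zero; eauto).
set (P := RInt (fun s => (T - s) * a s) 0 T).
assert (HPab : RInt (fun s => (T - s) * ab s) 0 T = P) by (apply RInt_ext_on; [lra| intros; rewrite Habe; auto]).
assert (HPpos : 0 < P).
{ destruct (Rlt_or_le 0 P) as [h|h]; auto. exfalso.
  assert (Lambda1 T eta alpha a <= 0).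
  { unfold Lambda1. fold P. destruct (Req_dec P 0) as [E|E]. rewrite E. unfold Rdiv; rewrite Rinv_0; lra.
    unfold Rdiv. assert (/ P < 0) by (apply Rinv_lt_0_compat; lra). nra. }
  nra. }
assert (HL1 : Lambda1 T eta alpha a * P = 1 - alpha * eta) by (unfold Lambda1; fold P; field; lra).
set (D2ab := RInt (fun s => (T - s) * ab s) eta T + / 2 * RInt (fun s => (2 * (T - eta) + alpha * (eta ^ 2 - s ^ 2)) * ab s) 0 eta).
assert (HD2 : RInt (fun s => (T - s) * a s) eta T + / 2 * RInt (fun s => (2 * (T - eta) + alpha * (eta ^ 2 - s ^ 2)) * a s) 0 eta = D2ab).
{ unfold D2ab. f_equal. apply RInt_ext_on; [lra| intros; rewrite Habe; auto; lra]. f_equal. apply RInt_ext_on; [lra| intros; rewrite Habe; auto; lra]. }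
assert (HCk : Cg (fun s => (2 * (T - eta) + alpha * (eta ^ 2 - s ^ 2)) * ab s)).
{ apply Cg_mult; auto. apply Cg_plus. apply Cg_const. apply Cg_mult. apply Cg_const. apply Cg_minus. apply Cg_const.
  apply Cg_mult. apply Cg_id. apply Cg_mult. apply Cg_id. apply Cg_const. }
assert (HD2pos : (T - eta) / T * P <= D2ab).
{ unfold D2ab. rewrite <- HPab. rewrite <- (ChaslesC _ 0 eta T) by (apply Cg_Tg; auto).
  assert (I1 : (T - eta) / T * RInt (fun s => (T - s) * ab s) 0 eta <= / 2 * RInt (fun s => (2 * (T - eta) + alpha * (eta ^ 2 - s ^ 2)) * ab s) 0 eta).
  { rewrite <- !RInt_scalC by (try apply Cg_Tg; auto). apply RInt_leC. lra.
    apply (Cg_mult (fun _ => _)). apply Cg_const. apply Cg_Tg; auto.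
    apply (Cg_mult (fun _ => _)). apply Cg_const. auto.
    intros s Hs. assert (0 <= ab s) by auto.
    assert (E1 : (T - eta) / T * ((T - s) * ab s) = ((T - eta) - (T - eta) * s / T) * ab s) by (field; lra).
    assert (E2 : / 2 * ((2 * (T - eta) + alpha * (eta ^ 2 - s ^ 2)) * ab s) = ((T - eta) + alpha * (eta ^ 2 - s ^ 2) / 2) * ab s) by field.
    rewrite E1, E2. apply Rmult_le_compat_r; auto.
    assert (0 <= (T - eta) * s / T) by (apply Rdiv_le_0_compat; nra).
    assert (0 <= alpha * (eta ^ 2 - s ^ 2)) by (apply Rmult_le_pos; nra). lra. }
  assert (I2 : (T - eta) / T * RInt (fun s => (T - s) * ab s) eta T <= RInt (fun s => (T - s) * ab s) eta T).
  { assert (0 <= RInt (fun s => (T - s) * ab s) eta T) by (apply RInt_ge0C; [lra| apply Cg_Tg; auto| intros; apply Rmult_le_pos; auto; lra]).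
    assert ((T - eta) / T <= 1) by (apply Rmult_le_reg_r with T; [lra| unfold Rdiv; field_simplify; lra]).
    nra. }
  lra. }
assert (HD2p : 0 < D2ab) by (assert (0 < (T - eta) / T * P) by (apply Rmult_lt_0_compat; auto; apply Rdiv_lt_0_compat; lra); lra).
assert (HBkab : D2ab <= Bk T alpha eta ab).
{ unfold Bk, D2ab. rewrite <- (ChaslesC _ 0 eta T) by (apply Cg_Tg; auto).
  assert (RInt (fun s => / 2 * ((2 * (T - eta) + alpha * (eta ^ 2 - s ^ 2)) * ab s)) 0 eta <=
          RInt (fun s => (T - s) * ab s - alpha * ((eta - s) ^ 2 / 2 * ab s)) 0 eta).
  { apply RInt_leC. lra. apply (Cg_mult (fun _ => _)). apply Cg_const. auto.
    apply Cg_minus. apply Cg_Tg; auto. apply (Cg_mult (fun _ => _)). apply Cg_const. apply Cg_eg; auto.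
    intros s Hs. assert (0 <= ab s) by auto.
    assert (E : (T - s) * ab s - alpha * ((eta - s) ^ 2 / 2 * ab s) - / 2 * ((2 * (T - eta) + alpha * (eta ^ 2 - s ^ 2)) * ab s) = (eta - s) * (1 - alpha * eta) * ab s) by field.
    assert (0 <= (eta - s) * (1 - alpha * eta) * ab s) by (apply Rmult_le_pos; auto; apply Rmult_le_pos; lra). lra. }
  assert (Ce : Cg (fun s => alpha * ((eta - s) ^ 2 / 2 * ab s))) by (apply (Cg_mult (fun _ => _)); [apply Cg_const| apply Cg_eg; auto]).
  rewrite (RInt_minusC _ _ _ _ (Cg_Tg T ab Hab) Ce) in H.
  rewrite (RInt_scalC _ alpha _ _ (Cg_eg eta ab Hab)) in H.
  rewrite (RInt_scalC _ (/2) _ _ HCk) in H.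
  lra. }
set (ga := gammaP T eta alpha).
assert (Hga : ga = alpha * eta * (T - eta) / (T - alpha * eta ^ 2)) by reflexivity.
assert (Hden : 0 < T - alpha * eta ^ 2) by nra.
assert (Hga0 : 0 < ga) by (rewrite Hga; apply Rdiv_lt_0_compat; [repeat apply Rmult_lt_0_compat; lra| lra]).
assert (Hga1 : ga < 1).
{ rewrite Hga. apply Rmult_lt_reg_r with (T - alpha * eta ^ 2); auto. unfold Rdiv. rewrite Rmult_assoc, Rinv_l by lra. nra. }
set (ka := alpha * eta * (2 * T - eta) / (2 * T - alpha * eta ^ 2)).
assert (Hden2 : 0 < 2 * T - alpha * eta ^ 2) by nra.
assert (Hka0 : 0 < ka) by (apply Rdiv_lt_0_compat; [repeat apply Rmult_lt_0_compat; lra| lra]).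
assert (Hkaga : ga <= ka).
{ assert (E : ka - ga = alpha * eta * (T * eta * (1 - alpha * eta)) / ((2 * T - alpha * eta ^ 2) * (T - alpha * eta ^ 2))) by (unfold ka; rewrite Hga; field; lra).
  assert (0 <= alpha * eta * (T * eta * (1 - alpha * eta)) / ((2 * T - alpha * eta ^ 2) * (T - alpha * eta ^ 2))).
  { apply Rdiv_le_0_compat. repeat apply Rmult_le_pos; lra. apply Rmult_lt_0_compat; lra. }
  lra. }
set (L2 := Lambda2 T eta alpha a).
assert (HL2 : L2 = (1 - alpha * eta) / (ga * D2ab)) by (unfold L2, Lambda2; rewrite HD2; reflexivity).
assert (HL2p : 0 < L2) by (rewrite HL2; apply Rdiv_lt_0_compat; [lra| apply Rmult_lt_0_compat; lra]).
assert (HgLD : ga * L2 * D2ab = 1 - alpha * eta) by (rewrite HL2; field; lra).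
assert (Hb1' : ga * L2 / ka < beta1).
{ assert (ga * L2 / ka <= L2). { apply Rmult_le_reg_r with ka; auto. unfold Rdiv. rewrite Rmult_assoc, Rinv_l by lra. nra. }
  assert (L2 <= theta2 / ga * L2).
  { assert (1 <= theta2 / ga). { apply Rmult_le_reg_r with ga; auto. unfold Rdiv. rewrite Rmult_assoc, Rinv_l by lra. nra. } nra. }
  fold ga L2 in Hb1. lra. }
set (L1 := Lambda1 T eta alpha a). fold L1 in HL1, Hal1.
assert (HL1p : 0 < L1) by nra.
assert (Hal1L : alpha1 < L1) by nra.
set (e1 := (L1 - alpha1) / 2).
assert (He1 : 0 < e1) by (unfold e1; lra).
destruct (lim0_est f alpha1 e1 Hl0 He1) as [d0 [Hd0 Hd0e]].
set (r := d0 / 2).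
assert (Hr : 0 < r) by (unfold r; lra).
assert (Hsmall : forall y, y <= r -> Fe y <= (alpha1 + e1) * r).
{ intros y Hy. unfold Fe. destruct (Rle_dec y 0).
  - rewrite Rmax_right by lra. rewrite Hf0. apply Rmult_le_pos; lra.
  - rewrite Rmax_left by lra. specialize (Hd0e y ltac:(unfold r in *; lra)). apply abs_lt_e in Hd0e.
    replace (f y) with (y * (f y / y)) by (field; lra). apply Rle_trans with (y * (alpha1 + e1)). apply Rmult_le_compat_l; lra.
    rewrite Rmult_comm. apply Rmult_le_compat_l; lra. }
set (e2 := (beta1 - ga * L2 / ka) / 2).
assert (He2 : 0 < e2) by (unfold e2; lra).
assert (Hgk0 : 0 < ga * L2 / ka) by (apply Rdiv_lt_0_compat; auto; apply Rmult_lt_0_compat; auto).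
assert (Hbe : 0 < beta1 - e2) by (unfold e2; lra).
assert (HbeD : (beta1 - e2) * ka * D2ab > 1 - alpha * eta).
{ assert (beta1 - e2 > ga * L2 / ka) by (unfold e2; lra).
  assert ((beta1 - e2) * ka > ga * L2).
  { assert (E : ga * L2 = (ga * L2 / ka) * ka) by (field; lra). rewrite E. apply Rmult_lt_compat_r; lra. }
  rewrite <- HgLD. nra. }
destruct (liminf_est f beta1 e2 Hlinf He2) as [M0 HM0].
set (R0 := Rmax r (Rmax M0 0 / ka) + 1).
assert (HR0r : r < R0) by (unfold R0; assert (r <= Rmax r (Rmax M0 0 / ka)) by apply Rmax_l; lra).
assert (HR0M : M0 < ka * R0).
{ unfold R0. assert (Rmax M0 0 / ka <= Rmax r (Rmax M0 0 / ka)) by apply Rmax_r.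
  assert (ka * (Rmax M0 0 / ka) = Rmax M0 0) by (field; lra).
  assert (M0 <= Rmax M0 0) by apply Rmax_l. assert (0 <= Rmax M0 0) by apply Rmax_r. nra. }
assert (Hlarge : forall y, M0 < y -> 0 < y -> (beta1 - e2) * y <= Fe y).
{ intros y Hy Hy0. unfold Fe. rewrite Rmax_left by lra. specialize (HM0 y Hy). apply abs_lt_e in HM0.
  replace (f y) with (y * (f y / y)) by (field; lra). rewrite Rmult_comm. apply Rmult_le_compat_l; lra. }
set (dl := fun n : nat => T / INR (S n)).
assert (Hdl : forall n, 0 < dl n) by (intros; apply Rdiv_lt_0_compat; [lra| apply lt_0_INR; lia]).
assert (Hdlk : forall n, INR n * dl n = T - dl n) by (intros; unfold dl; rewrite S_INR; field; pose proof (pos_INR n); lra).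
assert (Hdlt : forall n, dl n <= T) by (intros; pose proof (Hdlk n); pose proof (pos_INR n); pose proof (Hdl n); nra).
set (Ph := fun n => Phi ab Fe (dl n) T alpha eta (S n)).
assert (Hpos : forall n, 0 < Ph n r).
{ intros n. unfold Ph. rewrite Phi_formula by auto.
  set (g := gk ab Fe (dl n) r n).
  assert (Hg : Cg g) by (apply gk_C; auto).
  assert (Hgle : forall s, 0 <= s <= T -> (T - s) * g s <= (alpha1 + e1) * r * ((T - s) * ab s)).
  { intros s Hs. replace ((alpha1 + e1) * r * ((T - s) * ab s)) with ((T - s) * (ab s * ((alpha1 + e1) * r))) by ring.
    apply Rmult_le_compat_l; [lra|]. unfold g, gk. apply Rmult_le_compat_l; auto. apply Hsmall.
    apply V_upper; auto. apply Rmax_r. }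
  assert (B1 : Bk T alpha eta g <= RInt (fun s => (T - s) * g s) 0 T) by (apply Bk_upper; auto; try lra; intros; apply gk_nonneg; auto).
  assert (B2 : RInt (fun s => (T - s) * g s) 0 T <= RInt (fun s => (alpha1 + e1) * r * ((T - s) * ab s)) 0 T).
  { apply RInt_leC. lra. apply Cg_Tg; auto. apply (Cg_mult (fun _ => _)). apply Cg_const. apply Cg_Tg; auto. auto. }
  rewrite (RInt_scalC _ ((alpha1 + e1) * r) _ _ (Cg_Tg T ab Hab)), HPab in B2.
  assert (X1 : 0 < (L1 - (alpha1 + e1)) * r * P) by (repeat apply Rmult_lt_0_compat; unfold e1; lra).
  assert (X2 : (L1 - (alpha1 + e1)) * r * P = r * (L1 * P) - (alpha1 + e1) * r * P) by ring.
  rewrite HL1 in X2. lra. }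
assert (Hneg : forall n, Ph n R0 < 0).
{ intros n. destruct (Rlt_or_le (Ph n R0) 0) as [h|h]; auto. exfalso.
  set (g := gk ab Fe (dl n) R0 n).
  assert (Hg : Cg g) by (apply gk_C; auto).
  assert (Hgp : forall s, 0 <= s -> 0 <= g s) by (intros; apply gk_nonneg; auto).
  assert (HPh2 := Phi_formula2 ab Fe (dl n) T alpha eta n R0 Hab HF). fold g in HPh2.
  assert (HPh1 := Phi_formula ab Fe (dl n) T alpha eta n R0 Hab HF). fold g in HPh1.
  unfold Ph in h.
  assert (HLL := large_lower T alpha eta g R0 Hg Hgp Hal0 (conj Heta0 HetaT) Hae ltac:(lra)).
  assert (Hk : forall t, 0 <= t <= T -> ka * R0 <= V ab Fe (dl n) R0 (S n) t).
  { intros t Ht. rewrite V_S. fold g. specialize (HLL t Ht). unfold ka.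
    apply Rmult_le_reg_r with (2 * T - alpha * eta ^ 2); auto.
    replace (alpha * eta * (2 * T - eta) / (2 * T - alpha * eta ^ 2) * R0 * (2 * T - alpha * eta ^ 2)) with (R0 * (alpha * eta * (2 * T - eta))) by (field; lra).
    lra. }
  assert (Hgl : forall s, 0 <= s <= T -> (beta1 - e2) * ka * R0 * ab s <= g s).
  { intros s Hs. unfold g, gk. set (m := Rmax (s - dl n) 0).
    assert (Hm : 0 <= m <= T) by (apply shift_in; auto).
    assert (Hm2 : m <= INR n * dl n) by (pose proof (Hdlt n); rewrite Hdlk; unfold m; apply Rmax_lub; lra).
    rewrite <- (V_inv ab Fe (dl n) R0 n m (Hdl n) (conj (proj1 Hm) Hm2)).
    specialize (Hk m Hm).
    assert (0 < ka * R0) by (apply Rmult_lt_0_compat; lra).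
    assert (HFe : (beta1 - e2) * V ab Fe (dl n) R0 (S n) m <= Fe (V ab Fe (dl n) R0 (S n) m)) by (apply Hlarge; lra).
    assert ((beta1 - e2) * (ka * R0) <= (beta1 - e2) * V ab Fe (dl n) R0 (S n) m) by (apply Rmult_le_compat_l; lra).
    rewrite Rmult_comm. apply Rmult_le_compat_l; auto. lra. }
  assert (HB : Bk T alpha eta (fun s => (beta1 - e2) * ka * R0 * ab s) <= Bk T alpha eta g).
  { apply Bk_mono; auto; try lra. apply (Cg_mult (fun _ => _)). apply Cg_const. auto. }
  rewrite Bk_scal in HB by auto.
  assert (HB2 : (beta1 - e2) * ka * R0 * D2ab <= (beta1 - e2) * ka * R0 * Bk T alpha eta ab).
  { apply Rmult_le_compat_l. assert (0 < (beta1 - e2) * ka) by (apply Rmult_lt_0_compat; lra). assert (0 < R0) by lra. nra. exact HBkab. }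
  assert (X : (beta1 - e2) * ka * R0 * D2ab > R0 * (1 - alpha * eta)).
  { replace ((beta1 - e2) * ka * R0 * D2ab) with (R0 * ((beta1 - e2) * ka * D2ab)) by ring.
    apply Rmult_gt_compat_l; lra. }
  lra. }
assert (Hivt : forall n, exists c, r <= c <= R0 /\ Ph n c = 0).
{ intros n. destruct (Ranalysis5.IVT_interv (fun c => - Ph n c) r R0) as [z [Hz1 Hz2]].
  - intros c Hc. change (continuity_pt (opp_fct (Ph n)) c). apply continuity_pt_opp. unfold Ph.
    apply (Phi_cont ab Fe (dl n) T A MC); auto; lra.
  - lra.
  - specialize (Hpos n); lra.
  - specialize (Hneg n); lra.
  - exists z. split; auto. lra. }
set (cs := fun n => proj1_sig (constructive_indefinite_description _ (Hivt n))).
assert (Hcs : forall n, r <= cs n <= R0 /\ Ph n (cs n) = 0).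
{ intros n. unfold cs. destruct (constructive_indefinite_description _ (Hivt n)) as [c Hc]. simpl. exact Hc. }
destruct ultra_exists as [U HU].
destruct (HMC R0) as [HMR HMRb].
set (MR := MC R0). fold MR in HMR, HMRb.
destruct (limit_step U HU T alpha eta ab Fe A cs (fun n => V ab Fe (dl n) (cs n) (S n)) dl r R0
  (r - T * (T * (A * MR))) R0 (T * (A * MR))) as [cL [w [HcL [Hweq [HGC [HwBC Hwb]]]]]].
- exact HT.
- lra.
- lra.
- exact Hab.
- exact HF.
- repeat apply Rmult_le_pos; lra.
- exact HA.
- intros s Hs. split; auto.
- intros n. apply Hcs.
- intros n. apply V_C; auto.
- intros n t Ht. destruct (Hcs n) as [[Hc1 Hc2] _]. split.
  + assert (cs n - T * (T * (A * MR)) <= V ab Fe (dl n) (cs n) (S n) t).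
    { apply (V_lower ab Fe (dl n) (cs n) (S n) T A MR R0); auto; lra. }
    lra.
  + assert (V ab Fe (dl n) (cs n) (S n) t <= cs n) by (apply V_upper; auto; lra). lra.
- intros n t t' Ht Ht'. destruct (Hcs n) as [[Hc1 Hc2] _].
  apply (V_lip ab Fe (dl n) (cs n) (S n) T A MR R0); auto; lra.
- exact Hdl.
- intros e He. destruct (archimed_cor1 (e / T)) as [N [HN HN0]]. apply Rdiv_lt_0_compat; lra.
  exists N. intros n Hn. unfold dl.
  assert (0 < INR N) by (apply lt_0_INR; auto).
  assert (INR N <= INR (S n)) by (apply le_INR; lia).
  assert (/ INR (S n) <= / INR N) by (apply Rinv_le_contravar; auto).
  assert (T * / INR (S n) < T * (e / T)) by (apply Rmult_lt_compat_l; lra).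
  replace (T * (e / T)) with e in H2 by (field; lra). unfold Rdiv. lra.
- intros n t Ht. rewrite V_S. f_equal. apply DI_ext_on with T; auto.
  intros s Hs. unfold gk. set (m := Rmax (s - dl n) 0).
  assert (Hm : 0 <= m <= T) by (apply shift_in; auto).
  assert (Hm2 : m <= INR n * dl n) by (pose proof (Hdlt n); rewrite Hdlk; unfold m; apply Rmax_lub; lra).
  rewrite (V_inv ab Fe (dl n) (cs n) n m (Hdl n) (conj (proj1 Hm) Hm2)). reflexivity.
- intros n. destruct (Hcs n) as [_ H0]. unfold Ph, Phi in H0. lra.
- set (G := fun s => ab s * Fe (w (clamp T s))). fold G in HGC, Hweq.
  assert (HG0 : forall s, 0 <= G s) by (intros; unfold G; apply Rmult_le_pos; auto).
  assert (HwC : Cg w) by (apply Cg_ext with (fun t => cL - DI G t); [intros; symmetry; apply Hweq| apply Cg_minus; [apply Cg_const| apply DI_C; auto]]).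
  assert (Hd1 : forall t, is_derive w t (- RInt G 0 t)).
  { intros t. apply (is_derive_ext (fun t => cL - DI G t) w). intros; symmetry; apply Hweq.
    eapply d_eq. apply (d_minus (fun _ => cL) (fun y => DI G y)). apply d_const. unfold DI.
    apply (prim_der (fun u => RInt G 0 u)). apply prim_C; auto. ring. }
  assert (HD1 : forall t, Derive w t = - RInt G 0 t) by (intros; apply is_derive_unique; auto).
  assert (Hd2 : forall t, is_derive (Derive w) t (- G t)).
  { intros t. apply (is_derive_ext (fun t => - RInt G 0 t)). intros; symmetry; auto.
    apply (is_derive_opp (fun t => RInt G 0 t)). apply prim_der; auto. }
  assert (HDD2 : forall t, Derive_n w 2 t = - G t).
  { intros t. unfold Derive_n. apply is_derive_unique. apply (is_derive_ext (Derive w)). intros; reflexivity. apply Hd2. }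
  assert (Hmono : forall t t', 0 <= t <= t' -> w t' <= w t).
  { intros t t' Htt. rewrite !Hweq. assert (DI G t <= DI G t') by (apply DI_mono; auto). lra. }
  assert (HwT : 0 <= w T).
  { assert (RInt (fun _ => w T) 0 eta <= RInt w 0 eta).
    { apply RInt_leC. lra. apply Cg_const. auto. intros x Hx. apply Hmono. lra. }
    rewrite RInt_constR in H.
    assert (alpha * ((eta - 0) * w T) <= alpha * RInt w 0 eta) by (apply Rmult_le_compat_l; lra).
    rewrite <- HwBC in H0. nra. }
  exists w. split; [|split; [|split; [|split; [|split]]]].
  + split.
    * intros t Ht. split. exists (- RInt G 0 t). apply Hd1. exists (- G t). apply Hd2.
    * intros x Hx. apply (filterlim_ext (fun y => - G y)). intros; symmetry; apply HDD2. rewrite HDD2.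
      eapply filterlim_filter_le_1; [| exact (Cg_opp G HGC x)].
      intros Q HQ. unfold within. apply filter_imp with (2 := HQ). auto.
  + intros t Ht. rewrite HDD2. unfold G. rewrite clamp_id by lra. rewrite Habe by lra.
    unfold Fe. rewrite Rmax_left. ring. apply Rle_trans with (w T); auto. apply Hmono; lra.
  + rewrite HD1, RInt_pt. ring.
  + exact HwBC.
  + intros t Ht. assert (w T <= w t) by (apply Hmono; lra). lra.
  + exists 0. split. lra. rewrite Hweq. unfold DI. rewrite RInt_pt. lra.
Qed.
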